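(* Let $(t_1,h_1),(t_2,h_2)\in\mathbb R\times\mathbb R^+$ with $t_2\le t_1$, and suppose the curves $t\mapsto((t-t_1)^2+h_1^2)^{1/2}$ and $t\mapsto((t-t_2)^2+h_2^2)^{1/2}$ intersect at $(0,\hat h_0)$, $\hat h_0>0$. For $t\ge0$ let $\hat h_t=((t-t_1)^2+h_1^2)^{1/2}$ and $U^s_r=\{(x,y):y>0,(x-s)^2+y^2<r^2\}$. Then the collection of sets $\{U^t_{\hat h_t}\setminus U^0_{\hat h_0}\}_{t\ge0}$ is increasing in $t$. *)

(* Defs.v *)
From Stdlib Require Import Reals.
Open Scope R_scope.

Definition U (s r : R) (p : R * R) : Prop :=
  0 < snd p /\ (fst p - s) ^ 2 + (snd p) ^ 2 < r ^ 2.

Definition hhat (t1 h1 t : R) : R := sqrt ((t - t1) ^ 2 + h1 ^ 2).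

(* Main.v *)
Require Import Defs.
From Stdlib Require Import Reals Lra Psatz.
Open Scope R_scope.

Theorem lemma5p13 (t1 h1 t2 h2 h0 : R)
  (Hh1 : 0 < h1) (Hh2 : 0 < h2) (Ht : t2 <= t1)
  (Hh0 : 0 < h0)
  (Hc1 : sqrt ((0 - t1) ^ 2 + h1 ^ 2) = h0)
  (Hc2 : sqrt ((0 - t2) ^ 2 + h2 ^ 2) = h0) :
  forall s t : R, 0 <= s -> s <= t ->
  forall p : R * R,
    (U s (hhat t1 h1 s) p /\ ~ U 0 h0 p) ->
    (U t (hhat t1 h1 t) p /\ ~ U 0 h0 p).
Proof.
  intros s t Hs Hst [x y] [[Hy H1] H2].
  unfold U, hhat in *; cbn [fst snd] in *.
  assert (E0 : h0 ^ 2 = (0 - t1) ^ 2 + h1 ^ 2).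
  { rewrite <- Hc1. apply pow2_sqrt. apply Rplus_le_le_0_compat; apply pow2_ge_0. }
  rewrite pow2_sqrt in H1 by (apply Rplus_le_le_0_compat; apply pow2_ge_0).
  rewrite pow2_sqrt by (apply Rplus_le_le_0_compat; apply pow2_ge_0).
  assert (H3 : x ^ 2 + y ^ 2 >= h0 ^ 2).
  { destruct (Rlt_or_le (x ^ 2 + y ^ 2) (h0 ^ 2)) as [h|h]; [|lra].
    exfalso; apply H2; split; [lra|]. replace (x - 0) with x by ring. lra. }
  split; [|exact H2]. split; [lra|].
  assert (Hsx : 0 < s * (x - t1)).
  { assert (Q : (x - s) ^ 2 + y ^ 2 - ((s - t1) ^ 2 + h1 ^ 2) = (x ^ 2 + y ^ 2) - ((0 - t1) ^ 2 + h1 ^ 2) - 2 * (s * (x - t1))) by ring.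
    lra. }
  assert (Hx : x - t1 > 0).
  { destruct (Rlt_or_le 0 (x - t1)); [lra|]. assert (s * (t1 - x) >= 0) by (apply Rle_ge, Rmult_le_pos; lra). lra. }
  assert (Q : (x - t) ^ 2 + y ^ 2 - ((t - t1) ^ 2 + h1 ^ 2) = (x ^ 2 + y ^ 2) - ((0 - t1) ^ 2 + h1 ^ 2) - 2 * (t * (x - t1))) by ring.
  assert (Q2 : (x - s) ^ 2 + y ^ 2 - ((s - t1) ^ 2 + h1 ^ 2) = (x ^ 2 + y ^ 2) - ((0 - t1) ^ 2 + h1 ^ 2) - 2 * (s * (x - t1))) by ring.
  assert (M : s * (x - t1) <= t * (x - t1)) by (apply Rmult_le_compat_r; lra).
  lra.
Qed.
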